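(* Let $u$ be a stable sorted configuration on $K_{m,n}$ with $r$-vector $(r_1,\dots,r_n)$. Let $h$ be the smallest index $1\le h\le n$ with $r_h=\max\{r_1,\dots,r_n\}$, and let $k:=u_{b_h}-r_h+2$ (so $k=1+\#\{j\le m-1: u_{a_j}+1\le h-1\}$; one has $1\le k\le m-1$ when $m\ge 2$). Define $$u':=u+(r_h-2)\Delta^{(a_m)}-\sum_{s=k}^{m-1}\Delta^{(a_s)}-\sum_{t=h}^{n}\Delta^{(b_t)}.$$ Then $u'=\mathrm{park}(u)$. Explicitly, $u'_{b_i}=u_{b_i}-u_{b_h}+m\,\chi(i\le h-1)$ for $1\le i\le n$, $u'_{a_j}=u_{a_j}-(h-1)+n\,\chi(j\le k-1)$ for $1\le j\le m-1$, and $u'_{a_m}=\mathrm{degree}(u)-\sum_i u'_{b_i}-\sum_{j\le m-1}u'_{a_j}$; moreover the sorted version of $u'$ has $a$-values $(u'_{a_k},\dots,u'_{a_{m-1}},u'_{a_1},\dots,u'_{a_{k-1}})$ and $b$-values $(u'_{b_h},\dots,u'_{b_n},u'_{b_1},\dots,u'_{b_{h-1}})$ (with the same sink value).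
   Context: Let $m,n\ge 1$. $K_{m,n}$ is the complete bipartite graph with vertex set $V=A_m\sqcup B_n$, $A_m=\{a_1,\dots,a_m\}$, $B_n=\{b_1,\dots,b_n\}$, with exactly one edge $\{a_i,b_j\}$ for every $i,j$; $a_m$ is the sink. A configuration is a function $u:V\to\mathbb Z$; $\mathrm{degree}(u)=\sum_c u_c$. For $c\in V$ with graph degree $d_c$ ($d_{a_i}=n$, $d_{b_j}=m$), $\Delta^{(c)}=d_c e_c-\sum_{c'\text{ adjacent to }c}e_{c'}$, with $e_c$ the indicator configuration of $c$; $\Delta^{(C)}=\sum_{c\in C}\Delta^{(c)}$. A configuration $u$ is parking if $u_c\ge0$ for all $c\neq a_m$ and for every non-empty $C\subseteq V\setminus\{a_m\}$, $u-\Delta^{(C)}$ has a negative value at some vertex other than $a_m$; every configuration is toppling equivalent (difference in the integer span of the $\Delta^{(c)}$) to a unique parking configuration $\mathrm{park}(u)$. $u$ is stable if $0\le u_{a_j}\le n-1$ for $1\le j\le m-1$ and $0\le u_{b_i}\le m-1$ for all $i$; sorted if $u_{a_1}\le\dots\le u_{a_{m-1}}$ and $u_{b_1}\le\dots\le u_{b_n}$ (no condition at the sink). The $r$-vector of a stable sorted $u$ is $(r_1,\dots,r_n)$ with $r_i=u_{b_i}+1-\#\{j\in\{1,\dots,m-1\}: u_{a_j}+1\le i-1\}$. $\chi(\mathcal P)$ is $1$ if $\mathcal P$ holds and $0$ otherwise. *)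

(* Defs.v *)
From HB Require Import structures.
From mathcomp Require Import all_boot all_order all_algebra.
Set Implicit Arguments. Unset Strict Implicit. Unset Printing Implicit Defensive.
Import Order.TTheory GRing.Theory Num.Theory.
Local Open Scope ring_scope.

(* Vertices: inl j  stands for a_{j+1} (j : 'I_m),  inr i  stands for b_{i+1}. *)
Definition V (m n : nat) := ('I_m + 'I_n)%type.
Definition config (m n : nat) := V m n -> int.

Definition is_sink m n (c : V m n) : bool :=
  if c is inl j then (j : nat) == m.-1 else false.

Definition vdeg m n (c : V m n) : int := if c is inl _ then n%:Z else m%:Z.

Definition adj m n (c d : V m n) : bool :=
  match c, d with inl _, inr _ | inr _, inl _ => true | _, _ => false end.

Definition lap m n (c : V m n) : config m n :=
  fun x => if x == c then vdeg c else if adj c x then -1 else 0.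

Definition lapC m n (P : pred (V m n)) : config m n :=
  fun x => \sum_(c | P c) lap c x.

Definition degree m n (u : config m n) : int := \sum_c u c.

Definition toppling_equiv m n (u v : config m n) : Prop :=
  exists z : V m n -> int, forall x, v x = u x + \sum_c z c * lap c x.

Definition is_parking m n (u : config m n) : Prop :=
  (forall c, ~~ is_sink c -> 0 <= u c) /\
  (forall C : {set V m n}, C != set0 -> (forall c, c \in C -> ~~ is_sink c) ->
     exists c, ~~ is_sink c /\ u c - lapC (mem C) c < 0).

Definition stable m n (u : config m n) : Prop :=
  (forall j : 'I_m, ~~ @is_sink m n (inl j) -> 0 <= u (inl j) <= n%:Z - 1) /\
  (forall i : 'I_n, 0 <= u (inr i) <= m%:Z - 1).

Definition sorted_config m n (u : config m n) : Prop :=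
  (forall j1 j2 : 'I_m, ~~ @is_sink m n (inl j1) -> ~~ @is_sink m n (inl j2) ->
      (j1 <= j2)%N -> u (inl j1) <= u (inl j2)) /\
  (forall i1 i2 : 'I_n, (i1 <= i2)%N -> u (inr i1) <= u (inr i2)).

Definition cnt_a m n (u : config m n) (t : int) : nat :=
  #|[set j : 'I_m | ~~ @is_sink m n (inl j) & u (inl j) + 1 <= t]|.

(* r-vector, 0-based: rvec u i = r_{i+1} = u_{b_{i+1}} + 1 - #{j<=m-1 : u_{a_j}+1 <= i} *)
Definition rvec m n (u : config m n) (i : 'I_n) : int :=
  u (inr i) + 1 - (cnt_a u (i : nat)%:Z)%:Z.

(* u' := u + (r_h - 2) Delta^{(a_m)} - sum_{s=k}^{m-1} Delta^{(a_s)} - sum_{t=h}^{n} Delta^{(b_t)},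
   with h = h0 + 1 *)
Definition park_cand m n (u : config m n) (h0 : 'I_n) (k : int) : config m n :=
  fun x => u x + (rvec u h0 - 2) * lapC (@is_sink m n) x
           - lapC (fun c => if c is inl j then (k <= (j : nat)%:Z + 1) && ((j : nat)%:Z + 1 <= m%:Z - 1)
                            else false) x
           - lapC (fun c => if c is inr i then (h0 <= i)%N else false) x.

(* Main.v *)
Require Import Defs.
From HB Require Import structures.
From mathcomp Require Import all_boot all_order all_algebra zify.
Import Order.TTheory GRing.Theory Num.Theory.
Local Open Scope ring_scope.

Lemma lapC_inl {m n} (P : pred (V m n)) j :
  lapC P (inl j) = (if P (inl j) then n%:Z else 0) - (#|[pred i : 'I_n | P (inr i)]|)%:Z.
Proof.
rewrite /lapC big_sumType /=.
have -> : \sum_(i | P (inr i)) lap (inr i) (@inl 'I_m 'I_n j) = \sum_(i | P (inr i)) (-1 : int).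
  by apply: eq_bigr => i _.
rewrite sumr_const.
congr (_ + _); last by rewrite mulNrn -natz.
case: ifP => Pj.
  rewrite (bigD1 j) //= /lap eqxx /= big1 ?addr0 // => j' /andP [_ ne].
  rewrite /= /eq_op /=. by rewrite eq_sym (negbTE ne).
rewrite big1 // => j' Pj'. rewrite /lap /=.
have -> : (@inl 'I_m 'I_n j == inl j') = false.
  apply/negbTE; apply/eqP => [[E]]; by rewrite E Pj' in Pj.
done.
Qed.

Lemma lapC_inr {m n} (P : pred (V m n)) i :
  lapC P (inr i) = (if P (inr i) then m%:Z else 0) - (#|[pred j : 'I_m | P (inl j)]|)%:Z.
Proof.
rewrite /lapC big_sumType /=.
have -> : \sum_(j | P (inl j)) lap (inl j) (@inr 'I_m 'I_n i) = \sum_(j | P (inl j)) (-1 : int).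
  by apply: eq_bigr => j _.
rewrite sumr_const addrC.
congr (_ + _); last by rewrite mulNrn -natz.
case: ifP => Pj.
  rewrite (bigD1 i) //= /lap eqxx /= big1 ?addr0 // => j' /andP [_ ne].
  rewrite /= /eq_op /=. by rewrite eq_sym (negbTE ne).
rewrite big1 // => j' Pj'. rewrite /lap /=.
have -> : (@inr 'I_m 'I_n i == inr j') = false.
  apply/negbTE; apply/eqP => [[E]]; by rewrite E Pj' in Pj.
done.
Qed.
Lemma card_ordQ N (Q : pred nat) : #|[pred x : 'I_N | Q x]| = count Q (iota 0 N).
Proof.
rewrite -val_enum_ord count_map -size_filter cardE /enum_mem.
rewrite -filter_predI; congr size; apply: eq_filter => x /=. by rewrite andbT.
Qed.
Lemma count_int a b N : count (fun x => (a <= x < b)%N) (iota 0 N) = (minn b N - a)%N.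
Proof.
elim: N => [|N IH]; first by rewrite /= minn0.
rewrite -addn1 iotaD count_cat IH /= add0n addn0.
case: (leqP a N) => h1; case: (ltnP N b) => h2 /=; lia.
Qed.
Lemma card_int N a b : #|[pred x : 'I_N | (a <= x < b)%N]| = (minn b N - a)%N.
Proof. by rewrite (card_ordQ N (fun x => (a <= x < b)%N)) count_int. Qed.
Lemma cnt_split {m n} (u : config m n) (t1 t2 : int) : t1 <= t2 ->
  cnt_a u t2 = addn (cnt_a u t1) #|[set j : 'I_m | ~~ @is_sink m n (inl j) & (t1 < u (inl j) + 1 <= t2)]|.
Proof.
move=> le12.
rewrite /cnt_a -(cardsID [set j | ~~ @is_sink m n (inl j) & u (inl j) + 1 <= t1] [set j | ~~ @is_sink m n (inl j) & u (inl j) + 1 <= t2]).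
congr addn; apply: eq_card => j; rewrite !inE.
  case: (~~ _) => //=. case: (boolP (u (inl j) + 1 <= t1)) => h; case: (boolP (u (inl j) + 1 <= t2)) => h' //=; exfalso; lia.
rewrite ltNge. by case: (is_sink _); case: (u (inl j) + 1 <= t1).
Qed.
Lemma ns_lt {m n} {j : 'I_m} : ~~ @is_sink m n (inl j) -> (j < m.-1)%N.
Proof. rewrite /= => /eqP; have := ltn_ord j; lia. Qed.
Lemma lt_ns {m n} {j : 'I_m} : (j < m.-1)%N -> ~~ @is_sink m n (inl j).
Proof. rewrite /= => h; apply/eqP; lia. Qed.

Lemma cnt_seg {m n} (u : config m n) (t : int) : sorted_config u ->
  forall j : 'I_m, ~~ @is_sink m n (inl j) -> (u (inl j) + 1 <= t) = (j < cnt_a u t)%N.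
Proof.
move=> [sa _] j nsj.
set S := [set j | ~~ @is_sink m n (inl j) & u (inl j) + 1 <= t].
have down: forall x y : 'I_m, (x <= y)%N -> y \in S -> x \in S.
  move=> x y xy; rewrite !inE => /andP [nsy le].
  have nsx : ~~ @is_sink m n (inl x) by apply: lt_ns; have := ns_lt nsy; lia.
  rewrite nsx /=. have h := sa x y nsx nsy xy. have le2 : (u (inl y) + 1 <= t)%R by exact le.
  suff : (u (inl x) + 1 <= t)%R by []. move: h le2. move: (u (inl x)) (u (inl y)) => ax ay h le2. lia.
rewrite /cnt_a -/S.
apply/idP/idP.
- move=> H. have jS: j \in S by rewrite inE nsj H.
  have sub: [pred x : 'I_m | (0 <= x < j.+1)%N] \subset S.
    apply/subsetP => x; rewrite inE => /andP [_ xj]; apply: down jS; lia.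
  have := subset_leq_card sub; rewrite card_int. have := ltn_ord j. lia.
- move=> H. case: (boolP (u (inl j) + 1 <= t)) => // hn. exfalso.
  have sub: S \subset [pred x : 'I_m | (0 <= x < j)%N].
    apply/subsetP => x xS; rewrite inE /=. case: (ltnP x j) => // jx.
    have := down _ _ jx xS. by rewrite inE nsj (negbTE hn).
  have := subset_leq_card sub; rewrite card_int. lia.
Qed.

Lemma cnt_le {m n} (u : config m n) (t : int) : (cnt_a u t <= m.-1)%N.
Proof.
rewrite /cnt_a.
have sub: [set j | ~~ @is_sink m n (inl j) & u (inl j) + 1 <= t] \subset [pred x : 'I_m | (0 <= x < m.-1)%N].
  apply/subsetP => x; rewrite inE => /andP [nsx _]; rewrite inE /=. exact: ns_lt nsx.
apply: (leq_trans (subset_leq_card sub)); rewrite card_int; lia.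
Qed.

Lemma cnt0 {m n} (u : config m n) : stable u -> cnt_a u 0 = 0%N.
Proof.
move=> [sa _]; apply: eq_card0 => j; rewrite inE.
case: (boolP (~~ @is_sink m n (inl j))) => //= nsj.
have /andP [h1 h2] := sa j nsj. apply/negbTE. rewrite -ltNge. move: h1 h2. move: (u (inl j)) => x h1 h2. lia.
Qed.
Lemma card_last m : (0 < m)%N -> #|[pred j : 'I_m | (j : nat) == m.-1]| = 1%N.
Proof.
move=> m0. rewrite (eq_card (B := [pred x : 'I_m | (m.-1 <= x < m)%N])) ?card_int; first by rewrite minnn; lia.
move=> x; rewrite !inE /=. have xm := ltn_ord x. apply/idP/idP; lia.
Qed.

Lemma card_Pa m (c : nat) (k : int) : k = 1 + c%:Z -> (c <= m.-1)%N ->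
  #|[pred j : 'I_m | (k <= (j : nat)%:Z + 1) && ((j : nat)%:Z + 1 <= m%:Z - 1)]| = (m.-1 - c)%N.
Proof.
move=> hk cm. rewrite (eq_card (B := [pred x : 'I_m | (c <= x < m.-1)%N])) ?card_int.
  have -> : minn m.-1 m = m.-1 by lia. done.
move=> x; rewrite !inE /= hk. have xm := ltn_ord x. apply/idP/idP; lia.
Qed.

Lemma card_false (T : finType) : #|[pred x : T | false]| = 0%N.
Proof. by apply: eq_card0. Qed.

Lemma pc_inr {m n} (u : config m n) (h0 : 'I_n) (k : int) (i : 'I_n) : (0 < m)%N ->
  k = 1 + (cnt_a u (h0 : nat)%:Z)%:Z ->
  park_cand u h0 k (inr i) = u (inr i) - u (inr h0) + m%:Z * (if (i < h0)%N then 1 else 0).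
Proof.
move=> m0 hk. rewrite /park_cand !lapC_inr /=.
rewrite card_last // (@card_Pa m _ _ hk (cnt_le u _)) card_false /rvec.
have := cnt_le u (h0 : nat)%:Z.
move: (cnt_a u (h0 : nat)%:Z) => c cm.
case: (leqP h0 i) => hi /=; lia.
Qed.

Lemma card_ge n (h : nat) : #|[pred i : 'I_n | (h <= i)%N]| = (n - h)%N.
Proof.
rewrite (eq_card (B := [pred x : 'I_n | (h <= x < n)%N])) ?card_int ?minnn //.
move=> x; rewrite !inE /= (ltn_ord x). by rewrite andbT.
Qed.

Lemma pc_inl {m n} (u : config m n) (h0 : 'I_n) (k : int) (j : 'I_m) : 
  ~~ @is_sink m n (inl j) ->
  park_cand u h0 k (inl j) = u (inl j) - (h0 : nat)%:Z + n%:Z * (if (j : nat)%:Z + 1 <= k - 1 then 1 else 0).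
Proof.
move=> nsj. have jm := ns_lt nsj. rewrite /park_cand !lapC_inl (negbTE nsj) /=.
rewrite !card_false card_ge.
have hn : (h0 < n)%N := ltn_ord h0.
case: (boolP (k <= (j : nat)%:Z + 1)) => hk /=.
  have -> : ((j : nat)%:Z + 1 <= m%:Z - 1) = true by apply/idP; lia.
  have -> : ((j : nat)%:Z + 1 <= k - 1) = false by apply/negbTE; lia.
  lia.
have -> : ((j : nat)%:Z + 1 <= k - 1) = true by apply/idP; lia.
lia.
Qed.

Lemma sum_lap {m n} (c : V m n) : \sum_x lap c x = 0.
Proof.
case: c => [j|i]; rewrite big_sumType /=.
  rewrite (bigD1 j) //= /lap eqxx /= big1; last first.
    move=> j' ne. rewrite /=. have -> : (@inl 'I_m 'I_n j' == inl j) = false.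
      by apply/negbTE; apply/eqP => [[E]]; rewrite E eqxx in ne.
    done.
  rewrite (eq_bigr (fun _ => -1)) // sumr_const card_ord mulNrn -natz /=. by rewrite addr0 subrr.
rewrite addrC (bigD1 i) //= /lap eqxx /= big1; last first.
  move=> i' ne. rewrite /=. have -> : (@inr 'I_m 'I_n i' == inr i) = false.
    by apply/negbTE; apply/eqP => [[E]]; rewrite E eqxx in ne.
  done.
rewrite (eq_bigr (fun _ => -1)) // sumr_const card_ord mulNrn -natz /=. by rewrite addr0 subrr.
Qed.

Lemma sum_lapC {m n} (P : pred (V m n)) : \sum_x lapC P x = 0.
Proof.
rewrite /lapC exchange_big /= big1 // => c _. exact: sum_lap.
Qed.

Lemma degree_pc {m n} (u : config m n) h0 k : degree (park_cand u h0 k) = degree u.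
Proof.
rewrite /degree /park_cand !sumrB big_split /= -mulr_sumr !sum_lapC.
by rewrite mulr0 !subr0 ?addr0.
Qed.

Lemma topp_pc {m n} (u : config m n) h0 k : toppling_equiv u (park_cand u h0 k).
Proof.
set P2 := (fun c : V m n => if c is inl j then (k <= (j : nat)%:Z + 1) && ((j : nat)%:Z + 1 <= m%:Z - 1) else false).
set P3 := (fun c : V m n => if c is inr i then (h0 <= i)%N else false).
exists (fun c => (if is_sink c then rvec u h0 - 2 else 0) - (if P2 c then 1 else 0) - (if P3 c then 1 else 0)).
move=> x. rewrite /park_cand -/P2 -/P3 /lapC.
rewrite -!addrA; congr (_ + _).
have E : forall P : pred (V m n), \sum_(c | P c) lap c x = \sum_c (if P c then 1 else 0) * lap c x.
  move=> P; rewrite big_mkcond; apply: eq_bigr => c _; by case: (P c); rewrite ?mul1r ?mul0r.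
rewrite !E mulr_sumr -!sumrN -big_split -big_split /=.
apply: eq_bigr => c _.
case: (is_sink c); case: (P2 c); case: (P3 c); rewrite /= ?mulr0 ?mulr1 ?mul0r ?mul1r; lia.
Qed.

Lemma sink_pc {m n} (u : config m n) h0 k (c : V m n) : is_sink c ->
  park_cand u h0 k c = degree u - \sum_(i : 'I_n) park_cand u h0 k (inr i)
                         - \sum_(j : 'I_m | ~~ @is_sink m n (inl j)) park_cand u h0 k (inl j).
Proof.
case: c => [j0|//] /= /eqP sj.
rewrite -(degree_pc u h0 k) /degree big_sumType /= (bigD1 j0) //=.
rewrite (eq_bigl (fun j : 'I_m => (j : nat) != m.-1)); last first.
move=> j /=. by rewrite -sj. by rewrite !addrK.
Qed.

Lemma exists_small N (X : {set 'I_N}) (hi : nat) : X != set0 ->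
  (forall x, x \in X -> (x < hi)%N) -> exists2 x, x \in X & (x + #|X| <= hi)%N.
Proof.
move=> Xne Xlt.
have X0 : (0 < #|X|)%N by rewrite card_gt0.
have Xhi : (#|X| <= hi)%N.
  have sub : X \subset [pred x : 'I_N | (0 <= x < hi)%N].
    by apply/subsetP => x xX; rewrite inE /= Xlt.
  apply: (leq_trans (subset_leq_card sub)); rewrite card_int; lia.
case: (boolP [exists x, (x \in X) && (x + #|X| <= hi)%N]) => [/existsP [x /andP [xX le]] | hn]; first by exists x.
exfalso. move/existsPn: hn => hn.
have sub : X \subset [pred x : 'I_N | ((hi - #|X|).+1 <= x < hi)%N].
  apply/subsetP => x xX; rewrite inE /=. have := Xlt x xX. have := hn x. rewrite xX /= => h1 h2. move: h1 h2 X0 Xhi; move: #|X| => s h1 h2 X0 Xhi; apply/andP; split; lia.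
have := subset_leq_card sub; rewrite card_int. lia.
Qed.

Lemma card_ns m n : #|[set j : 'I_m | ~~ @is_sink m n (inl j)]| = m.-1.
Proof.
rewrite (eq_card (B := [pred x : 'I_m | (0 <= x < m.-1)%N])) ?card_int.
  have -> : minn m.-1 m = m.-1 by lia. lia.
move=> x; rewrite !inE /=. have xm := ltn_ord x. apply/idP/idP; lia.
Qed.

Lemma parking_pc {m n} (u : config m n) (h0 : 'I_n) (k : int) :
  (0 < m)%N -> (0 < n)%N -> stable u -> sorted_config u ->
  (forall i : 'I_n, rvec u i <= rvec u h0) ->
  (forall i : 'I_n, (i < h0)%N -> rvec u i < rvec u h0) ->
  k = 1 + (cnt_a u (h0 : nat)%:Z)%:Z ->
  is_parking (park_cand u h0 k).
Proof.
move=> m0 n0 st so rmax rstr hk.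
have [sta stb] := st. have [soa sob] := so.
have hn : (h0 < n)%N := ltn_ord h0.
have Hb : forall i, park_cand u h0 k (inr i) = u (inr i) - u (inr h0) + m%:Z * (if (i < h0)%N then 1 else 0).
  by move=> i; apply: pc_inr.
have Ha : forall j, ~~ @is_sink m n (inl j) -> park_cand u h0 k (inl j) =
     if u (inl j) + 1 <= (h0 : nat)%:Z then u (inl j) - (h0 : nat)%:Z + n%:Z else u (inl j) - (h0 : nat)%:Z.
  move=> j nsj. rewrite (pc_inl _ _ _ _ nsj) (cnt_seg _ _ so _ nsj) hk.
  move: (cnt_a u _) => c.
  case: (ltnP j c) => h /=.
    have -> : ((j : nat)%:Z + 1 <= 1 + c%:Z - 1) = true by apply/idP; lia.
    lia.
  have -> : ((j : nat)%:Z + 1 <= 1 + c%:Z - 1) = false by apply/negbTE; lia.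
  lia.
split.
  move=> [j|i] ns.
    rewrite Ha //; have /andP [a0 a1] := sta j ns; case: ifP => h; lia.
  rewrite Hb; case: ltnP => h /=.
    have /andP [b0 b1] := stb i; have /andP [c0 c1] := stb h0. lia.
  have := sob h0 i h. lia.
move=> C Cne Cns.
case: (boolP [exists c, ~~ is_sink c && (park_cand u h0 k c - lapC (mem C) c < 0)]) => [/existsP [c /andP [h1 h2]]|hn']; first by exists c.
exfalso. move/existsPn: hn' => H.
have H' : forall c, ~~ is_sink c -> 0 <= park_cand u h0 k c - lapC (mem C) c.
  move=> c nc; have := H c; rewrite nc /= -leNgt. done.
set A := [set j : 'I_m | inl j \in C]. set B := [set i : 'I_n | inr i \in C].
have HA : forall j, j \in A -> n%:Z - #|B|%:Z <= park_cand u h0 k (inl j).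
  move=> j; rewrite inE => jC. have := H' (inl j) (Cns _ jC). rewrite lapC_inl /= jC.
  rewrite (@eq_card _ _ B); last by move=> i; rewrite !inE.
  move: (park_cand u h0 k (inl j)) => p. move: #|B| => b. lia.
have HB : forall i, i \in B -> m%:Z - #|A|%:Z <= park_cand u h0 k (inr i).
  move=> i; rewrite inE => iC. have := H' (inr i) (Cns _ iC). rewrite lapC_inr /= iC.
  rewrite (@eq_card _ _ A); last by move=> j; rewrite !inE.
  move: (park_cand u h0 k (inr i)) => p. move: #|A| => a. lia.
have Aub : forall j, j \in A -> park_cand u h0 k (inl j) <= n%:Z - 1.
  move=> j; rewrite inE => jC. have nsj := Cns _ jC. rewrite Ha //.
  have /andP [a0 a1] := sta j nsj. case: ifP => h; lia.
have Ans : forall j, j \in A -> ~~ @is_sink m n (inl j) by move=> j; rewrite inE => /Cns.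
case: (eqVneq B set0) => [B0|Bne].
  case/set0Pn: Cne => [[j|i]] cC.
    have jA : j \in A by rewrite inE.
    have := HA j jA; have := Aub j jA. rewrite B0 cards0. 
    move: (park_cand u h0 k (inl j)) => p. lia.
  have : i \in B by rewrite inE.
  by rewrite B0 inE.
set Y := [set i : 'I_n | (h0 <= i)%N].
set X := B :&: Y.
case: (eqVneq X set0) => [X0|Xne].
  have Blt : forall x, x \in B -> (x < h0)%N.
    move=> x xB; case: (ltnP x h0) => // hx. have : x \in X by rewrite inE xB inE hx. by rewrite X0 inE.
  have [i iB iq] := exists_small _ _ _ Bne Blt.
  have ih : (i < h0)%N by apply: Blt.
  have le : (i : nat)%:Z <= (h0 : nat)%:Z by lia.
  have cs := cnt_split u _ _ le.
  set T := [set j : 'I_m | _ & _] in cs.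
  have hr := rstr i ih; rewrite /rvec in hr.
  have hb := HB i iB; rewrite Hb ih /= in hb.
  have sub : A \subset T.
    apply/subsetP => j jA. have nsj := Ans j jA. have := HA j jA; have := Aub j jA. rewrite Ha //.
    have /andP [a0 a1] := sta j nsj.
    rewrite inE nsj /=. move: a0 a1 iq. move: (u (inl j)) #|B| => x b a0 a1 iq.
    case: ifP => hj h1 h2. apply/andP; split; lia.
    exfalso; lia.
  have := subset_leq_card sub. move: cs hr hb. move: (#|A|) (#|T|) => a t. lia.
have [i iX iq] := exists_small _ _ _ Xne (fun x _ => ltn_ord x).
move: (iX); rewrite inE => /andP [iB iY]; rewrite inE in iY.
have BX : (#|B| <= #|X| + h0)%N.
  have := cardsID Y B.
  have sub : B :\: Y \subset [pred x : 'I_n | (0 <= x < h0)%N].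
    apply/subsetP => x; rewrite !inE => /andP [nY _]; by rewrite -ltnNge in nY.
  have := subset_leq_card sub; rewrite card_int. rewrite -/X. lia.
have le : (h0 : nat)%:Z <= (i : nat)%:Z by lia.
have cs := cnt_split u _ _ le.
set T := [set j : 'I_m | _ & _] in cs.
have hr := rmax i; rewrite /rvec in hr.
have hb := HB i iB; rewrite Hb ltnNge iY /= in hb.
have disj : forall j, j \in A -> j \in T -> False.
  move=> j jA. have nsj := Ans j jA. have := HA j jA. rewrite Ha // inE nsj /=.
  move: iq BX. move: (u (inl j)) #|B| #|X| => x b xx iq BX.
  case: ifP => hj h1 /andP [t1 t2]; lia.
have I0 : #|A :&: T| = 0%N.
  apply: eq_card0 => j; apply/negP; rewrite in_setI => /andP [ja jt]; exact: (disj j ja jt).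
have U := cardsU A T. rewrite I0 in U.
have sub : A :|: T \subset [set j : 'I_m | ~~ @is_sink m n (inl j)].
  apply/subsetP => j; rewrite in_setU => /orP [jA|]; first by rewrite inE Ans.
  by rewrite !inE => /andP [-> _].
have := subset_leq_card sub; rewrite card_ns.
move: cs hr hb U. move: (#|A|) (#|T|) (#|A :|: T|) => a t aut. lia.
Qed.

Lemma pw_enum N (P : pred 'I_N) (R : rel 'I_N) :
  (forall i j, P i -> P j -> (i < j)%N -> R i j) -> pairwise R [seq x <- enum 'I_N | P x].
Proof.
move=> HR.
have hp : pairwise (relpre val ltn) (enum 'I_N).
  rewrite -pairwise_map val_enum_ord -sorted_pairwise; last exact: ltn_trans.
  exact: iota_ltn_sorted.
apply: (sub_in_pairwise (P := P) (r := relpre val ltn)); last exact: pairwise_filter.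
  by move=> i j Pi Pj /= lt; apply: HR.
by apply/allP => x; rewrite mem_filter => /andP [].
Qed.

Lemma sorted_two N (f : 'I_N -> int) (P Q : pred 'I_N) :
  (forall i j, P i -> P j -> (i < j)%N -> f i <= f j) ->
  (forall i j, Q i -> Q j -> (i < j)%N -> f i <= f j) ->
  (forall i j, P i -> Q j -> f i <= f j) ->
  sorted <=%R ([seq f i | i <- enum 'I_N & P i] ++ [seq f i | i <- enum 'I_N & Q i]).
Proof.
move=> HP HQ HPQ.
rewrite sorted_pairwise; last exact: le_trans.
rewrite pairwise_cat !pairwise_map allrel_mapl allrel_mapr.
apply/and3P; split; [|exact: pw_enum|exact: pw_enum].
apply/allrelP => i j; rewrite !mem_filter => /andP [Pi _] /andP [Qj _]. exact: HPQ.
Qed.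

Theorem mainTheorem6 (m n : nat) (u : config m n) (h0 : 'I_n) :
  (0 < m)%N -> (0 < n)%N ->
  stable u -> sorted_config u ->
  (* h = h0 + 1 is the smallest index where the r-vector attains its maximum *)
  (forall i : 'I_n, rvec u i <= rvec u h0) ->
  (forall i : 'I_n, (i < h0)%N -> rvec u i < rvec u h0) ->
  let k := u (inr h0) - rvec u h0 + 2 in
  let u' := park_cand u h0 k in
  [/\ k = 1 + (cnt_a u (h0 : nat)%:Z)%:Z,
      (1 < m)%N -> 1 <= k <= m%:Z - 1,
      is_parking u' /\ toppling_equiv u u' &
   [/\
      (forall i : 'I_n,
         u' (inr i) = u (inr i) - u (inr h0) + m%:Z * (if (i < h0)%N then 1 else 0)),
      (forall j : 'I_m, ~~ @is_sink m n (inl j) ->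
         u' (inl j) = u (inl j) - (h0 : nat)%:Z + n%:Z * (if (j : nat)%:Z + 1 <= k - 1 then 1 else 0)),
      (forall c : V m n, is_sink c ->
         u' c = degree u - \sum_(i : 'I_n) u' (inr i)
                         - \sum_(j : 'I_m | ~~ @is_sink m n (inl j)) u' (inl j)) &
      sorted <=%R ([seq u' (inl j) | j : 'I_m <- enum 'I_m &
                      (k <= (j : nat)%:Z + 1) && ((j : nat)%:Z + 1 <= m%:Z - 1)]
                   ++ [seq u' (inl j) | j : 'I_m <- enum 'I_m & (j : nat)%:Z + 1 <= k - 1])
      /\ sorted <=%R ([seq u' (inr i) | i : 'I_n <- enum 'I_n & (h0 <= i)%N]
                      ++ [seq u' (inr i) | i : 'I_n <- enum 'I_n & (i < h0)%N])]].
Proof.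
move=> m0 n0 st so rmax rstr k u'.
have hk : k = 1 + (cnt_a u (h0 : nat)%:Z)%:Z by rewrite /k /rvec; lia.
have [sta stb] := st. have [soa sob] := so.
have hn : (h0 < n)%N := ltn_ord h0.
have cm := cnt_le u (h0 : nat)%:Z.
have Hb : forall i, u' (inr i) = u (inr i) - u (inr h0) + m%:Z * (if (i < h0)%N then 1 else 0).
  by move=> i; apply: pc_inr.
have Ha : forall j : 'I_m, ~~ @is_sink m n (inl j) ->
         u' (inl j) = u (inl j) - (h0 : nat)%:Z + n%:Z * (if (j : nat)%:Z + 1 <= k - 1 then 1 else 0).
  by move=> j; apply: pc_inl.
split.
- exact: hk.
- move=> m1.
  have c2 : (cnt_a u (h0 : nat)%:Z <= m.-2)%N.
    case: (posnP h0) => [h00|h0p].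
      rewrite h00 cnt0 //.
    have := rstr (Ordinal n0) h0p. rewrite /rvec /= cnt0 //.
    have /andP [b0 b1] := stb (Ordinal n0). have /andP [c0 c1] := stb h0.
    move: b0 b1 c0 c1. move: (u (inr (Ordinal n0))) (u (inr h0)) (cnt_a u (h0 : nat)%:Z) => x y c. lia.
  rewrite hk. apply/andP; split; lia.
- split; [exact: parking_pc | exact: topp_pc].
split.
- exact Hb.
- exact Ha.
- move=> c sc; exact: sink_pc.
split.
  apply: sorted_two.
  - move=> i j /andP [hi1 hi2] /andP [hj1 hj2] lt.
    have nsi : ~~ @is_sink m n (inl i) by apply: lt_ns; lia.
    have nsj : ~~ @is_sink m n (inl j) by apply: lt_ns; lia.
    rewrite !Ha //. have := soa i j nsi nsj (ltnW lt).
    case: ifP => h1; case: ifP => h2; lia.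
  - move=> i j hi hj lt.
    have nsi : ~~ @is_sink m n (inl i) by apply: lt_ns; lia.
    have nsj : ~~ @is_sink m n (inl j) by apply: lt_ns; lia.
    rewrite !Ha //. have := soa i j nsi nsj (ltnW lt).
    case: ifP => h1; case: ifP => h2; lia.
  - move=> i j /andP [hi1 hi2] hj.
    have nsi : ~~ @is_sink m n (inl i) by apply: lt_ns; lia.
    have nsj : ~~ @is_sink m n (inl j) by apply: lt_ns; lia.
    rewrite !Ha //. have /andP [a0 a1] := sta i nsi. have /andP [b0 b1] := sta j nsj.
    case: ifP => h1; case: ifP => h2; lia.
apply: sorted_two.
- move=> i j hi hj lt. rewrite !Hb. have := sob i j (ltnW lt).
  case: ltnP => h1; case: ltnP => h2; lia.
- move=> i j hi hj lt. rewrite !Hb. have := sob i j (ltnW lt).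
  case: ltnP => h1; case: ltnP => h2; lia.
- move=> i j hi hj. rewrite !Hb. have /andP [a0 a1] := stb i. have /andP [b0 b1] := stb j.
  case: ltnP => h1; case: ltnP => h2; lia.
Qed.
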